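(* Let $G=(V,E)$ be a task-assistance graph and $\pi=\langle v_0,\dots,v_k\rangle$ ($k\ge1$) a path in $G$, and let $N_{\mathcal{I}}^{\pi}:=\sum_{i=0}^{k}|\mathcal{I}(v_i)|$ be the total number of intervals of the vertices of $\pi$. Then the set of vertex-critical times $C_0$ of $\pi$ can be computed in $O(k+N_{\mathcal{I}}^{\pi})$ time.
   Context: A task-assistance graph is a directed graph $G=(V,E)$ in which every edge $e$ has a length $\ell(e)\ge 0$ and every vertex $v$ has a finite set $\mathcal{I}(v)$ of closed intervals contained in $[0,1]$. A path is $\pi=\langle v_0,\dots,v_k\rangle$ with $(v_i,v_{i+1})\in E$; vertices may repeat, and all quantities below are attached to positions $i$ in the path. Set $\ell(v_{-1},v_0):=0$, $\ell(v_k,v_{k+1}):=0$, $\ell(v_i):=\sum_{j=0}^{i-1}\ell(v_j,v_{j+1})$, $\ell^+(v_i):=\ell(v_i)+\tfrac12\ell(v_i,v_{i+1})$, $\ell^-(v_i):=\ell(v_i)-\tfrac12\ell(v_{i-1},v_i)$, and $\ell^+(v_i,v_j):=\ell^+(v_j)-\ell^+(v_i)$. Augmented interval sets per position: $J_i:=\mathcal{I}(v_i)$ for $0<i<k$, $J_0:=\mathcal{I}(v_0)\cup\{[\ell^+(v_0),\ell^+(v_0)]\}$, $J_k:=\mathcal{I}(v_k)\cup\{[1-\ell^+(v_{k-1},v_k),\,1-\ell^+(v_{k-1},v_k)]\}$. For positions $0\le a<b\le k$ the vertex-pair critical times are $C(a,b):=\{t_e:[t_s,t_e]\in J_a\}\cup\{t_s-(\ell^-(v_b)-\ell^+(v_a)):[t_s,t_e]\in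 J_b\}$, and the vertex-critical times of position $i$ are $C_i:=\bigcup_{0\le a<b\le k}\{\tau+\ell^+(v_a,v_i):\tau\in C(a,b)\}$. *)

(* Defs.v *)
From Stdlib Require Import Reals List Arith Lia.
Import ListNotations.
Open Scope R_scope.

(* An interval [t_s,t_e] is the pair (t_s,t_e); the finite set I(v) is a
   duplicate-free list of such pairs. *)
Record tagraph (V : Type) := TAGraph {
  edge : V -> V -> Prop;
  len : V -> V -> R;
  ivs : V -> list (R * R);
  len_nonneg : forall u w, edge u w -> 0 <= len u w;
  ivs_nodup : forall u, NoDup (ivs u);
  ivs_in01 : forall u ts te, In (ts, te) (ivs u) -> 0 <= ts <= te /\ te <= 1
}.
Arguments edge {V} _ _ _.
Arguments len {V} _ _ _.
Arguments ivs {V} _ _.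

(* A path <v_0,...,v_k> is given by k and v : nat -> V (only v 0..v k matter). *)
Definition is_path {V} (G : tagraph V) (k : nat) (v : nat -> V) : Prop :=
  forall i, (i < k)%nat -> edge G (v i) (v (S i)).

Section PathQuantities.
Context {V : Type} (G : tagraph V) (k : nat) (v : nat -> V).

(* l(v_i, v_{i+1}), with l(v_k, v_{k+1}) := 0 *)
Definition lnext (i : nat) : R := if (i <? k)%nat then len G (v i) (v (S i)) else 0.
(* l(v_{i-1}, v_i), with l(v_{-1}, v_0) := 0 *)
Definition lprev (i : nat) : R := match i with O => 0 | S j => len G (v j) (v i) end.
Fixpoint lpos (i : nat) : R := match i with O => 0 | S j => lpos j + lnext j end.
Definition lplus (i : nat) : R := lpos i + lnext i / 2.
Definition lminus (i : nat) : R := lpos i - lprev i / 2.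
Definition lplus2 (i j : nat) : R := lplus j - lplus i.

Definition J (i : nat) : list (R * R) :=
  ivs G (v i)
  ++ (if (i =? 0)%nat then [(lplus 0, lplus 0)] else [])
  ++ (if (i =? k)%nat then [(1 - lplus2 (pred k) k, 1 - lplus2 (pred k) k)] else []).

Definition Cpair (a b : nat) (t : R) : Prop :=
  (exists ts, In (ts, t) (J a)) \/
  (exists ts te, In (ts, te) (J b) /\ t = ts - (lminus b - lplus a)).

Definition Cvert (i : nat) (t : R) : Prop :=
  exists a b tau, (a < b)%nat /\ (b <= k)%nat /\ Cpair a b tau /\ t = tau + lplus2 a i.

Definition NI : nat := fold_right Nat.add 0%nat (map (fun i => length (ivs G (v i))) (seq 0 (S k))).

End PathQuantities.

(** * Cost model: a small first-order functional language over the real RAM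
    (unit-cost real arithmetic and comparison), with pairs, lists,
    let, list case analysis and list fold; every evaluation step costs 1. *)

Inductive val : Type :=
| VR (r : R) | VB (b : bool) | VNil | VCons (h t : val) | VPair (a b : val).

Inductive expr : Type :=
| EVar (n : nat)
| EConst (r : R)
| EAdd (e1 e2 : expr) | ESub (e1 e2 : expr) | EMul (e1 e2 : expr)
| ELe (e1 e2 : expr)
| EIf (c e1 e2 : expr)
| ENil | ECons (e1 e2 : expr)
| EPair (e1 e2 : expr) | EFst (e : expr) | ESnd (e : expr)
| ELet (e1 e2 : expr)                 (* e2 sees the value of e1 as var 0 *)
| ECase (e enil econs : expr)         (* econs sees head as var 0, tail as var 1 *)
| EFold (el einit estep : expr).      (* left fold; estep sees elem as var 0, acc as var 1 *)

Inductive eval : list val -> expr -> val -> nat -> Prop :=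
| ev_var env n w : nth_error env n = Some w -> eval env (EVar n) w 1
| ev_const env r : eval env (EConst r) (VR r) 1
| ev_add env e1 e2 a b c1 c2 : eval env e1 (VR a) c1 -> eval env e2 (VR b) c2 ->
    eval env (EAdd e1 e2) (VR (a + b)) (S (c1 + c2))
| ev_sub env e1 e2 a b c1 c2 : eval env e1 (VR a) c1 -> eval env e2 (VR b) c2 ->
    eval env (ESub e1 e2) (VR (a - b)) (S (c1 + c2))
| ev_mul env e1 e2 a b c1 c2 : eval env e1 (VR a) c1 -> eval env e2 (VR b) c2 ->
    eval env (EMul e1 e2) (VR (a * b)) (S (c1 + c2))
| ev_le env e1 e2 a b c1 c2 : eval env e1 (VR a) c1 -> eval env e2 (VR b) c2 ->
    eval env (ELe e1 e2) (VB (if Rle_dec a b then true else false)) (S (c1 + c2))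
| ev_if_t env c e1 e2 w c0 c1 : eval env c (VB true) c0 -> eval env e1 w c1 ->
    eval env (EIf c e1 e2) w (S (c0 + c1))
| ev_if_f env c e1 e2 w c0 c2 : eval env c (VB false) c0 -> eval env e2 w c2 ->
    eval env (EIf c e1 e2) w (S (c0 + c2))
| ev_nil env : eval env ENil VNil 1
| ev_cons env e1 e2 a b c1 c2 : eval env e1 a c1 -> eval env e2 b c2 ->
    eval env (ECons e1 e2) (VCons a b) (S (c1 + c2))
| ev_pair env e1 e2 a b c1 c2 : eval env e1 a c1 -> eval env e2 b c2 ->
    eval env (EPair e1 e2) (VPair a b) (S (c1 + c2))
| ev_fst env e a b c : eval env e (VPair a b) c -> eval env (EFst e) a (S c)
| ev_snd env e a b c : eval env e (VPair a b) c -> eval env (ESnd e) b (S c)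
| ev_let env e1 e2 a w c1 c2 : eval env e1 a c1 -> eval (a :: env) e2 w c2 ->
    eval env (ELet e1 e2) w (S (c1 + c2))
| ev_case_nil env e en ec w c0 c1 : eval env e VNil c0 -> eval env en w c1 ->
    eval env (ECase e en ec) w (S (c0 + c1))
| ev_case_cons env e en ec h t w c0 c1 : eval env e (VCons h t) c0 ->
    eval (h :: t :: env) ec w c1 -> eval env (ECase e en ec) w (S (c0 + c1))
| ev_fold env el ei es l a w c1 c2 c3 : eval env el l c1 -> eval env ei a c2 ->
    evalfold env es l a w c3 -> eval env (EFold el ei es) w (S (c1 + c2 + c3))
with evalfold : list val -> expr -> val -> val -> val -> nat -> Prop :=
| evf_nil env es a : evalfold env es VNil a a 1
| evf_cons env es h t a a' w c1 c2 : eval (h :: a :: env) es a' c1 ->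
    evalfold env es t a' w c2 -> evalfold env es (VCons h t) a w (S (c1 + c2)).

Fixpoint vlist (l : list val) : val :=
  match l with [] => VNil | x :: r => VCons x (vlist r) end.

Fixpoint reals_of (w : val) : option (list R) :=
  match w with
  | VNil => Some []
  | VCons (VR r) t => match reals_of t with Some l => Some (r :: l) | None => None end
  | _ => None
  end.

(* Input encoding of the path: the list over positions i = 0..k of
   (l(v_{i-1},v_i), list of the intervals (t_s,t_e) of I(v_i)). *)
Definition encode {V} (G : tagraph V) (k : nat) (v : nat -> V) : val :=
  vlist (map (fun i => VPair (VR (lprev G v i))
                             (vlist (map (fun p => VPair (VR (fst p)) (VR (snd p))) (ivs G (v i)))))
             (seq 0 (S k))).

(* Main.v *)
Require Import Defs.
From Stdlib Require Import Reals List Arith Lia Lra.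
Import ListNotations.
Open Scope R_scope.

Definition INNER_END := ECons (EAdd (ESnd (EVar 0)) (EVar 2)) (EVar 1).
Definition INNER_START := ECons (EAdd (EFst (EVar 0)) (EVar 2)) (EVar 1).
Definition STEP :=
  ELet (ESub (EVar 2) (EAdd (EFst (EVar 1)) (EMul (EFst (EVar 0)) (EConst (1/2)))))
   (EPair (EAdd (EFst (EVar 2)) (EFst (EVar 1)))
     (EPair (ESnd (EVar 1))
       (EFold (ESnd (EVar 1)) (EFold (EFst (ESnd (EVar 2))) (ESnd (ESnd (EVar 2))) INNER_END) INNER_START))).
Definition PROG :=
  ECase (EVar 0) ENil
   (ECase (EVar 1) ENil
     (ELet (EMul (EFst (EVar 0)) (EConst (1/2)))
       (ELet (EFold (EVar 4) (EPair (EConst 0) (EPair (ESnd (EVar 3)) ENil)) STEP)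
         (ECons (EVar 1) (ECons (EAdd (ESub (EConst 1) (EFst (EVar 0))) (EVar 1))
                                (ESnd (ESnd (EVar 0)))))))).

Definition enc_iv (p : R * R) : val := VPair (VR (fst p)) (VR (snd p)).

Lemma ev_conv env e w c c' : eval env e w c -> c = c' -> eval env e w c'.
Proof. intros H ->; exact H. Qed.
Lemma evf_conv env e l a w c c' : evalfold env e l a w c -> c = c' -> evalfold env e l a w c'.
Proof. intros H ->; exact H. Qed.

Ltac evar_ok := simpl; reflexivity.

Lemma inner_end_ok : forall rest D ps out, exists out' c,
  evalfold (VR D :: rest) INNER_END (vlist (map enc_iv ps)) (vlist (map VR out)) (vlist (map VR out')) c
  /\ c = (7 * length ps + 1)%nat
  /\ (forall t, In t out' <-> In t out \/ exists p, In p ps /\ t = snd p + D).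
Proof.
  intros rest D; induction ps as [|a ps IH]; intros out.
  - exists out, 1%nat. split; [constructor|]. split; [reflexivity|]. simpl. firstorder.
  - destruct (IH (snd a + D :: out)) as (out' & c & Hf & Hc & Hin).
    exists out', (S (6 + c)). split; [|split].
    + simpl. eapply evf_conv; [eapply (evf_cons _ _ _ _ _ (vlist (map VR (snd a + D :: out)))); [|exact Hf] | ].
      eapply ev_conv.
      * unfold INNER_END; simpl. econstructor; [econstructor; [econstructor; econstructor; reflexivity | econstructor; reflexivity] | econstructor; reflexivity].
      * reflexivity.
      * reflexivity.
    + simpl. lia.
    + intro t. rewrite Hin. simpl. split.
      * intros [[H|H]|(p & Hp & ->)]; [right; exists a; auto | left; auto | right; exists p; auto].
      * intros [H|(p & [Hp|Hp] & ->)]; [left; right; auto | subst; left; left; auto | right; exists p; auto].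
Qed.

Lemma inner_start_ok : forall rest D ps out, exists out' c,
  evalfold (VR D :: rest) INNER_START (vlist (map enc_iv ps)) (vlist (map VR out)) (vlist (map VR out')) c
  /\ c = (7 * length ps + 1)%nat
  /\ (forall t, In t out' <-> In t out \/ exists p, In p ps /\ t = fst p + D).
Proof.
  intros rest D; induction ps as [|a ps IH]; intros out.
  - exists out, 1%nat. split; [constructor|]. split; [reflexivity|]. simpl. firstorder.
  - destruct (IH (fst a + D :: out)) as (out' & c & Hf & Hc & Hin).
    exists out', (S (6 + c)). split; [|split].
    + simpl. eapply evf_conv; [eapply (evf_cons _ _ _ _ _ (vlist (map VR (fst a + D :: out)))); [|exact Hf] | ].
      eapply ev_conv.
      * unfold INNER_START; simpl. econstructor; [econstructor; [econstructor; econstructor; reflexivity | econstructor; reflexivity] | econstructor; reflexivity].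
      * reflexivity.
      * reflexivity.
    + simpl. lia.
    + intro t. rewrite Hin. simpl. split.
      * intros [[H|H]|(p & Hp & ->)]; [right; exists a; auto | left; auto | right; exists p; auto].
      * intros [H|(p & [Hp|Hp] & ->)]; [left; right; auto | subst; left; left; auto | right; exists p; auto].
Qed.

Lemma step_ok : forall rest H L cur S prev out, exists out' c,
  eval (VPair (VR L) (vlist (map enc_iv cur))
        :: VPair (VR S) (VPair (vlist (map enc_iv prev)) (vlist (map VR out)))
        :: VR H :: rest) STEP
       (VPair (VR (S + L)) (VPair (vlist (map enc_iv cur)) (vlist (map VR out')))) c
  /\ c = (31 + 7 * length prev + 7 * length cur)%nat
  /\ (forall t, In t out' <-> In t out
        \/ (exists p, In p prev /\ t = snd p + (H - (S + L * (1/2))))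
        \/ (exists p, In p cur /\ t = fst p + (H - (S + L * (1/2))))).
Proof.
  intros rest H L cur S prev out.
  set (D := H - (S + L * (1/2))).
  set (env := VR D :: VPair (VR L) (vlist (map enc_iv cur))
        :: VPair (VR S) (VPair (vlist (map enc_iv prev)) (vlist (map VR out)))
        :: VR H :: rest).
  destruct (inner_end_ok (tl env) D prev out) as (o1 & c1 & H1 & Hc1 & Hi1).
  destruct (inner_start_ok (tl env) D cur o1) as (o2 & c2 & H2 & Hc2 & Hi2).
  exists o2. eexists. split; [|split].
  - unfold STEP. eapply ev_let.
    + repeat econstructor.
    + fold D. econstructor.
      * repeat econstructor.
      * econstructor.
        -- repeat econstructor.
        -- econstructor.
           ++ repeat econstructor.
           ++ econstructor; [repeat econstructor | repeat econstructor | exact H1].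
           ++ exact H2.
  - subst c1 c2. lia.
  - intro t. rewrite Hi2, Hi1. fold D. tauto.
Qed.

Definition posv {V} (G : tagraph V) (v : nat -> V) (i : nat) : val :=
  VPair (VR (lprev G v i)) (vlist (map enc_iv (ivs G (v i)))).

Fixpoint sl {V} (G : tagraph V) (v : nat -> V) (s n : nat) : nat :=
  match n with O => O | S n' => (length (ivs G (v s)) + sl G v (S s) n')%nat end.

Definition item {V} (G : tagraph V) k v (H : R) (i : nat) (t : R) : Prop :=
  (exists p, In p (ivs G (v (pred i))) /\ t = snd p + (H - (lpos G k v (pred i) + lprev G v i * (1/2))))
  \/ (exists p, In p (ivs G (v i)) /\ t = fst p + (H - (lpos G k v (pred i) + lprev G v i * (1/2)))).

Lemma lpos_S {V} (G : tagraph V) k v j : (j < k)%nat -> lpos G k v (S j) = lpos G k v j + lprev G v (S j).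
Proof. intros Hj. simpl. unfold lnext. apply Nat.ltb_lt in Hj. rewrite Hj. reflexivity. Qed.

Lemma outer_ok {V} (G : tagraph V) k v H rest : forall n s out,
  (1 <= s)%nat -> (s + n <= S k)%nat -> exists out' c,
  evalfold (VR H :: rest) STEP (vlist (map (posv G v) (seq s n)))
   (VPair (VR (lpos G k v (pred s))) (VPair (vlist (map enc_iv (ivs G (v (pred s))))) (vlist (map VR out))))
   (VPair (VR (lpos G k v (pred (s+n)))) (VPair (vlist (map enc_iv (ivs G (v (pred (s+n)))))) (vlist (map VR out')))) c
  /\ (c <= 32*n + 7 * sl G v (pred s) n + 7 * sl G v s n + 1)%nat
  /\ (forall t, In t out' <-> In t out \/ exists i, (s <= i < s+n)%nat /\ item G k v H i t).
Proof.
  induction n as [|n IH]; intros s out Hs Hn.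
  - exists out, 1%nat. rewrite Nat.add_0_r. split; [constructor|]. split; [lia|].
    intro t. split; [tauto|]. intros [?|(i & Hi & _)]; [auto|lia].
  - destruct (step_ok rest H (lprev G v s) (ivs G (v s)) (lpos G k v (pred s)) (ivs G (v (pred s))) out)
      as (o1 & c1 & E1 & Hc1 & Hi1).
    destruct (IH (S s) o1 ltac:(lia) ltac:(lia)) as (o2 & c2 & E2 & Hc2 & Hi2).
    exists o2, (S (c1 + c2)). split; [|split].
    + simpl. replace (pred (s + S n)) with (pred (S s + n)) by lia.
      eapply evf_cons; [exact E1|].
      destruct s as [|j]; [lia|]. simpl pred in *. rewrite <- lpos_S by lia. exact E2.
    + destruct s as [|j]; [lia|]. simpl in Hc1, Hc2 |- *. lia.
    + intro t. rewrite Hi2, Hi1. split.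
      * intros [[?|[?|?]]|(i & Hi & Ht)].
        -- auto.
        -- right. exists s. split; [lia|]. left. exact H0.
        -- right. exists s. split; [lia|]. right. exact H0.
        -- right. exists i. split; [lia|]. exact Ht.
      * intros [?|(i & Hi & Ht)]; [auto|].
        destruct (Nat.eq_dec i s) as [->|Hne].
        -- destruct Ht as [?|?]; auto.
        -- right. exists i. split; [lia|]. exact Ht.
Qed.

Lemma reals_of_vlist l : reals_of (vlist (map VR l)) = Some l.
Proof. induction l; simpl; [reflexivity|]. rewrite IHl. reflexivity. Qed.

Lemma NI_sl {V} (G : tagraph V) v : forall n s,
  fold_right Nat.add 0%nat (map (fun i => length (ivs G (v i))) (seq s n)) = sl G v s n.
Proof. induction n; intros s; simpl; [reflexivity|]. rewrite IHn. reflexivity. Qed.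

Lemma sl_S {V} (G : tagraph V) v : forall n s, sl G v s (S n) = (sl G v s n + length (ivs G (v (s + n))))%nat.
Proof.
  induction n; intros s.
  - simpl. replace (s + 0)%nat with s by lia. lia.
  - change (sl G v s (S (S n))) with (length (ivs G (v s)) + sl G v (S s) (S n))%nat.
    rewrite IHn. replace (s + S n)%nat with (S s + n)%nat by lia. simpl. lia.
Qed.

Lemma run_ok {V} (G : tagraph V) k' v : exists o c,
  eval [encode G (S k') v] PROG
    (vlist (map VR (lprev G v 1 * (1/2) :: (1 - lpos G (S k') v (S k') + lprev G v 1 * (1/2)) :: o))) c
  /\ (c <= 60 + 32 * S k' + 7 * sl G v 0 (S k') + 7 * sl G v 1 (S k'))%nat
  /\ (forall t, In t o <-> exists i, (1 <= i < S (S k'))%nat /\ item G (S k') v (lprev G v 1 * (1/2)) i t).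
Proof.
  set (H := lprev G v 1 * (1/2)).
  set (inp := encode G (S k') v).
  set (t0 := vlist (map (posv G v) (seq 1 (S k')))).
  set (rest := [posv G v 1; vlist (map (posv G v) (seq 2 k')); posv G v 0; t0; inp]).
  destruct (outer_ok G (S k') v H rest (S k') 1 [] ltac:(lia) ltac:(lia)) as (o & c & E & Hc & Hi).
  exists o. eexists. split; [|split].
  - assert (Hinp : inp = VCons (posv G v 0) t0) by reflexivity.
    unfold PROG. eapply ev_case_cons.
    + econstructor. simpl. rewrite Hinp. reflexivity.
    + eapply ev_case_cons.
      * econstructor. reflexivity.
      * eapply ev_let.
        -- repeat econstructor.
        -- eapply ev_let.
           ++ eapply ev_fold; [econstructor; reflexivity | | exact E].
              repeat econstructor.
           ++ simpl. repeat econstructor.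
  - simpl in Hc |- *. lia.
  - intro t. rewrite Hi. simpl. split; [intros [[]|?]; auto | auto].
Qed.

Lemma lplus_lt {V} (G : tagraph V) K v j : (j < K)%nat -> lplus G K v j = lpos G K v j + lprev G v (S j) / 2.
Proof. intros Hj. unfold lplus, lnext. apply Nat.ltb_lt in Hj. rewrite Hj. reflexivity. Qed.
Lemma lplus_K {V} (G : tagraph V) K v : lplus G K v K = lpos G K v K.
Proof. unfold lplus, lnext. rewrite Nat.ltb_irrefl. lra. Qed.
Lemma lminus_eq {V} (G : tagraph V) K v b : lminus G K v b = lpos G K v b - lprev G v b / 2.
Proof. reflexivity. Qed.
Lemma lplus2_eq {V} (G : tagraph V) K v a b : lplus2 G K v a b = lplus G K v b - lplus G K v a.
Proof. reflexivity. Qed.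

Lemma J_iff {V} (G : tagraph V) K v a p : In p (J G K v a) <->
  In p (ivs G (v a)) \/ (a = 0%nat /\ p = (lplus G K v 0, lplus G K v 0))
  \/ (a = K /\ p = (1 - lplus2 G K v (pred K) K, 1 - lplus2 G K v (pred K) K)).
Proof.
  unfold J. rewrite !in_app_iff.
  destruct (Nat.eqb_spec a 0), (Nat.eqb_spec a K); simpl; intuition (subst; auto; try discriminate; try congruence).
Qed.

Lemma spec_ok {V} (G : tagraph V) k' v o :
  (forall t, In t o <-> exists i, (1 <= i < S (S k'))%nat /\ item G (S k') v (lprev G v 1 * (1/2)) i t) ->
  forall t, In t (lprev G v 1 * (1/2) :: (1 - lpos G (S k') v (S k') + lprev G v 1 * (1/2)) :: o)
            <-> Cvert G (S k') v 0 t.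
Proof.
  intros Hi t. set (K := S k').
  assert (F1 : lplus G K v 0 = lprev G v 1 * (1/2)).
  { rewrite lplus_lt by (unfold K; lia). simpl. lra. }
  assert (FK : lplus G K v k' = lpos G K v k' + lprev G v K / 2) by (apply lplus_lt; unfold K; lia).
  assert (FK2 : lpos G K v K = lpos G K v k' + lprev G v K) by (apply lpos_S; unfold K; lia).
  pose proof (lplus_K G K v) as FK3.
  unfold Cvert, Cpair. cbn [In]. rewrite Hi. split.
  - intros [Ht|[Ht|(i & Hi1 & [(p & Hp & Ht)|(p & Hp & Ht)])]].
    + exists 0%nat, 1%nat, (lplus G K v 0). split; [lia|]. split; [unfold K; lia|]. split.
      * left. exists (lplus G K v 0). apply J_iff. right. left. auto.
      * rewrite lplus2_eq. unfold K in *; lra.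
    + exists 0%nat, K, ((1 - lplus2 G K v (pred K) K) - (lminus G K v K - lplus G K v 0)).
      split; [unfold K; lia|]. split; [lia|]. split.
      * right. do 2 eexists. split; [apply J_iff; right; right; split; reflexivity|reflexivity].
      * rewrite !lplus2_eq, lminus_eq. simpl pred. unfold K in *; lra.
    + destruct i as [|j]; [lia|]. simpl pred in *. destruct p as [ts te].
      exists j, (S j), te. split; [lia|]. split; [unfold K in *; lia|]. split.
      * left. exists ts. apply J_iff. left. exact Hp.
      * rewrite lplus2_eq, F1, (lplus_lt G K v j) by (unfold K; lia). cbn [fst snd] in Ht. unfold K in *; lra.
    + destruct i as [|j]; [lia|]. simpl pred in *. destruct p as [ts te].
      exists 0%nat, (S j), (ts - (lminus G K v (S j) - lplus G K v 0)).
      split; [lia|]. split; [unfold K in *; lia|]. split.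
      * right. exists ts, te. split; [apply J_iff; left; exact Hp|reflexivity].
      * rewrite lplus2_eq, lminus_eq, lpos_S by (unfold K in *; lia). cbn [fst snd] in Ht. unfold K in *; lra.
  - intros (a & b & tau & Hab & HbK & HC & Ht). rewrite lplus2_eq in Ht.
    destruct HC as [(ts & Hin)|(ts & te & Hin & Htau)].
    + apply J_iff in Hin. destruct Hin as [Hin|[(-> & Hp)|(-> & _)]]; [|left|lia].
      * right. right. exists (S a). split; [unfold K in *; lia|]. left. exists (ts, tau).
        split; [exact Hin|]. cbn [fst snd pred]. rewrite (lplus_lt G K v a) in Ht by lia. unfold K in *; lra.
      * injection Hp as _ ->. unfold K in *; lra.
    + apply J_iff in Hin. destruct Hin as [Hin|[(-> & _)|(-> & Hp)]]; [|lia|].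
      * destruct b as [|j]; [lia|]. right. right. exists (S j). split; [unfold K in *; lia|].
        right. exists (ts, te). split; [exact Hin|]. simpl pred. simpl fst.
        rewrite lminus_eq, lpos_S in Htau by lia. unfold K in *; lra.
      * injection Hp as -> _. right. left. rewrite lplus2_eq, lminus_eq in Htau. simpl pred in Htau. unfold K in *; lra.
Qed.

Theorem lemma1 :
  exists (P : expr) (c : nat),
    forall (V : Type) (G : tagraph V) (k : nat) (v : nat -> V),
      (1 <= k)%nat -> is_path G k v ->
      exists (out : val) (cost : nat) (l : list R),
        eval [encode G k v] P out cost /\
        reals_of out = Some l /\
        (forall t, In t l <-> Cvert G k v 0 t) /\
        (cost <= c * (k + NI G k v))%nat.
Proof.
  exists PROG, 200%nat. intros V G k v Hk _.
  destruct k as [|k']; [lia|].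
  destruct (run_ok G k' v) as (o & c & E & Hc & Hi).
  eexists; exists c; eexists. split; [exact E|]. split; [apply reals_of_vlist|]. split.
  - apply spec_ok. exact Hi.
  - unfold NI. rewrite NI_sl. pose proof (sl_S G v (S k') 0).
    change (sl G v 0 (S (S k'))) with (length (ivs G (v 0)) + sl G v 1 (S k'))%nat in *.
    lia.
Qed.
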